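(* (Wedderburn Formula.) Let $t\in\mathbb{R}$, let $D$ be a nonconstant complex polynomial with $\mu_a$ the multiplicity of each root $a$. The remainder of the division of the generalized polynomial $e^{tX}$ by $D$ (the unique polynomial $R$ of degree $<\deg D$ with $e^{tX}=Dq+R$, $q$ a generalized polynomial) is $$\sum_{D(a)=0}J_a^{\mu_a-1}\!\left(e^{tX}\frac{(X-a)^{\mu_a}}{D(X)}\right)\frac{D(X)}{(X-a)^{\mu_a}},$$ where $J_a^{\mu}(e^{tX}g(X))$, for a rational fraction $g$ without pole at $a$ and $\mu\ge0$, is the unique polynomial of degree $\le\mu$ congruent modulo $(X-a)^{\mu+1}$ to $e^{at}J_a^\mu(g)\sum_{n=0}^{\mu}\frac{t^n(X-a)^n}{n!}$.
   Context: A generalized polynomial is a family $f=(f_a)_{a\in\mathbb{C}}$ with $f_a=\sum_{n\ge0}f_{a,n}(X-a)^n\in\mathbb{C}[[X-a]]$, with componentwise operations; complex polynomials and rational fractions without poles are identified with families of their Taylor expansions. $e^{tX}$ is the generalized polynomial $\big(e^{at}\sum_{n\ge0}\frac{t^n(X-a)^n}{n!}\big)_{a\in\mathbb{C}}$. $J_a^{m}(h):=\sum_{n\le m}h_{a,n}(X-a)^n$. *)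

(* Defs.v *)
From HB Require Import structures.
From mathcomp Require Import all_boot all_order all_algebra.
From mathcomp Require Import reals sequences trigo.
From mathcomp Require Export complex.

Set Implicit Arguments.
Unset Strict Implicit.
Unset Printing Implicit Defensive.

Import Order.TTheory GRing.Theory Num.Theory.
Local Open Scope ring_scope.
Local Open Scope complex_scope.

Section Defs.
Variable R : realType.
Local Notation C := R[i].

Definition cexp (z : C) : C :=
  let: x +i* y := z in (expR x)%:C * (cos y +i* sin y).

(* A generalized polynomial: a family (f_a)_{a in C} of formal power series,
   f_a = sum_n f a n (X - a)^n. *)
Definition gpoly := C -> nat -> C.

Definition gadd (f g : gpoly) : gpoly := fun a n => f a n + g a n.
Definition gmul (f g : gpoly) : gpoly :=
  fun a n => \sum_(i < n.+1) f a i * g a (n - i)%N.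

Definition taylor (p : {poly C}) (a : C) (n : nat) : C :=
  (p \Po ('X + a%:P))`_n.

Definition gpoly_of_poly (p : {poly C}) : gpoly := fun a => taylor p a.

Definition gexp (t : R) : gpoly :=
  fun a n => cexp (a * t%:C) * (t%:C ^+ n / (n`!)%:R).

(* inverse of a formal power series c with c 0 != 0 (first n+1 coefficients) *)
Fixpoint sinv_seq (c : nat -> C) (n : nat) : seq C :=
  match n with
  | 0 => [:: (c 0%N)^-1]
  | n'.+1 => let s := sinv_seq c n' in
      rcons s (- (c 0%N)^-1 * \sum_(j < n'.+1) c j.+1 * nth 0 s (n' - j)%N)
  end.
Definition sinv (c : nat -> C) (n : nat) : C := nth 0 (sinv_seq c n) n.

Definition jet (h : nat -> C) (a : C) (m : nat) : {poly C} :=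
  \sum_(n < m.+1) h n *: ('X - a%:P) ^+ n.

(* Taylor expansion at a of the rational fraction (X-a)^mu / D = 1 / E,
   where E = D / (X-a)^mu, mu = multiplicity of a *)
Definition cofactor (D : {poly C}) (a : C) : {poly C} :=
  D %/ ('X - a%:P) ^+ (mup a D).

(* J_a^{mu_a - 1}( e^{tX} (X-a)^{mu_a} / D(X) ) * D(X) / (X-a)^{mu_a} *)
Definition wedderburn_term (t : R) (D : {poly C}) (a : C) : {poly C} :=
  let E := cofactor D a in
  let g : gpoly := fun _ => sinv (taylor E a) in
  jet (gmul (gexp t) g a) a (mup a D).-1 * E.

(* sum over the roots of D, enumerated without repetition by rs *)
Definition wedderburn (t : R) (D : {poly C}) (rs : seq C) : {poly C} :=
  \sum_(a <- rs) wedderburn_term t D a.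

End Defs.

(* Main.v *)
Require Import Defs.
From HB Require Import structures.
From mathcomp Require Import all_boot all_order all_algebra.
From mathcomp Require Import reals complex.
From mathcomp Require Import zify.
From Stdlib Require Import FunctionalExtensionality.
Import GRing.Theory Num.Theory.
Local Open Scope ring_scope.

Section W.
Variable R : realType.
Local Notation C := R[i].
Local Notation cof := (@Defs.cofactor R).

Definition tp (p : {poly C}) (a : C) := p \Po ('X + a%:P).

Lemma taylorE (p : {poly C}) (a : C) n : taylor p a n = (tp p a)`_n.
Proof. by []. Qed.

Lemma tpM (p q : {poly C}) a : tp (p * q) a = tp p a * tp q a.
Proof. by rewrite /tp comp_polyM. Qed.

Lemma tpB (p q : {poly C}) a : tp (p - q) a = tp p a - tp q a.
Proof. by rewrite /tp comp_polyB. Qed.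

Lemma tp_sum (I : Type) (r : seq I) (F : I -> {poly C}) a :
  tp (\sum_(i <- r) F i) a = \sum_(i <- r) tp (F i) a.
Proof.
elim: r => [|x r IH]; first by rewrite !big_nil /tp comp_poly0.
by rewrite !big_cons /tp comp_polyD -IH.
Qed.

Lemma tpXa (a : C) n : tp (('X - a%:P) ^+ n) a = 'X^n.
Proof.
rewrite /tp -comp_Xn_poly -comp_polyA comp_polyB comp_polyX comp_polyC addrK.
by rewrite comp_Xn_poly.
Qed.

Lemma dvd_of_taylor (P : {poly C}) (a : C) m :
  (forall n, (n < m)%N -> taylor P a n = 0) -> ('X - a%:P) ^+ m %| P.
Proof.
move=> H.
have tk : take_poly m (tp P a) = 0.
  apply/polyP => i; rewrite coef_take_poly coef0.
  by case: ifP => // /H; rewrite taylorE.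
have := poly_take_drop m (tp P a); rewrite tk add0r => E.
have -> : P = tp P a \Po ('X - a%:P) by rewrite /tp comp_polyXaddC_K.
rewrite -E comp_polyM comp_Xn_poly; exact: dvdp_mulIr.
Qed.

Lemma taylor_of_dvd (P : {poly C}) (a : C) m :
  ('X - a%:P) ^+ m %| P -> forall n, (n < m)%N -> taylor P a n = 0.
Proof.
move=> /divpK E n lt; rewrite -E taylorE tpM tpXa coefMXn.
by rewrite lt.
Qed.


Lemma size_sinv_seq (c : nat -> C) n : size (sinv_seq c n) = n.+1.
Proof. by elim: n => [|n IH] //=; rewrite size_rcons IH. Qed.

Lemma nth_sinv_seq (c : nat -> C) n k :
  (k <= n)%N -> nth 0 (sinv_seq c n) k = sinv c k.
Proof.
elim: n => [|n IH]; first by rewrite leqn0 => /eqP ->.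
rewrite leq_eqVlt => /orP [/eqP ->|lt]; first by [].
by rewrite /= nth_rcons size_sinv_seq lt IH.
Qed.

Lemma sinvP (c : nat -> C) m : c 0%N != 0 ->
  \sum_(j < m.+1) sinv c j * c (m - j)%N = (m == 0%N)%:R.
Proof.
move=> c0; case: m => [|m].
  by rewrite big_ord1 /sinv /= mulVf.
rewrite big_ord_recr /= subnn.
have -> : sinv c m.+1 = - (c 0%N)^-1 * \sum_(j < m.+1) c j.+1 * sinv c (m - j)%N.
  rewrite /sinv /= nth_rcons size_sinv_seq ltnn eqxx; congr (_ * _).
  by apply: eq_bigr => j _; rewrite nth_sinv_seq // leq_subr.
rewrite mulrAC mulNr mulVf // mulN1r.
rewrite (reindex_inj rev_ord_inj) /=.
rewrite -sumrB big1 // => j _; rewrite mulrC; apply/eqP; rewrite subr_eq0; apply/eqP.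
congr (_ * _); congr (c _); have := ltn_ord j; lia.
Qed.

Fixpoint qseq (d s : nat -> C) (mu n : nat) : seq C :=
  if n is n'.+1 then
    rcons (qseq d s mu n')
      ((s (n + mu)%N - \sum_(j < n) nth 0 (qseq d s mu n') j * d (n + mu - j)%N) / d mu)
  else [:: s mu / d mu].

Definition qfun d s mu n := nth 0 (qseq d s mu n) n.

Lemma size_qseq d s mu n : size (qseq d s mu n) = n.+1.
Proof. by elim: n => [|n IH] //=; rewrite size_rcons IH. Qed.

Lemma nth_qseq d s mu n k :
  (k <= n)%N -> nth 0 (qseq d s mu n) k = qfun d s mu k.
Proof.
elim: n => [|n IH]; first by rewrite leqn0 => /eqP ->.
rewrite leq_eqVlt => /orP [/eqP ->|lt]; first by [].
by rewrite /= nth_rcons size_qseq lt IH.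
Qed.

Lemma qfunE d s mu n : qfun d s mu n =
  (s (n + mu)%N - \sum_(j < n) qfun d s mu j * d (n + mu - j)%N) / d mu.
Proof.
case: n => [|n]; first by rewrite big_ord0 subr0.
rewrite /qfun /= nth_rcons size_qseq ltnn eqxx; congr ((_ - _) / _).
by apply: eq_bigr => j _; rewrite nth_qseq // -ltnS.
Qed.

Lemma qfunP (d s : nat -> C) mu :
  (forall i, (i < mu)%N -> d i = 0) -> d mu != 0 ->
  (forall i, (i < mu)%N -> s i = 0) ->
  forall m, \sum_(i < m.+1) d i * qfun d s mu (m - i)%N = s m.
Proof.
move=> d0 dmu s0 m.
case: (ltnP m mu) => [lt|ge].
  rewrite big1 ?s0 // => i _; rewrite d0 ?mul0r //.
  by apply: leq_ltn_trans lt; rewrite -ltnS.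
rewrite (reindex_inj rev_ord_inj) /=.
rewrite -(big_mkord xpredT (fun j => d (m.+1 - j.+1)%N * qfun d s mu (m - (m.+1 - j.+1))%N)).
pose n := (m - mu)%N.
rewrite (big_cat_nat _ (n := n.+1)) //=; last by rewrite /n; lia.
rewrite [X in _ + X]big_nat_cond [X in _ + X]big1; last first.
  move=> j /andP [/andP [lj uj] _]; rewrite d0 ?mul0r //; rewrite /n in lj; lia.
rewrite addr0 big_nat_recr //= big_mkord.
have -> : (m.+1 - n.+1 = mu)%N by rewrite /n; lia.
have -> : (m - mu = n)%N by [].
rewrite (qfunE d s mu n) mulrC mulfVK //.
have -> : (n + mu = m)%N by rewrite /n; lia.
rewrite (eq_bigr (fun j : 'I_n => qfun d s mu j * d (m - j)%N)); first by rewrite addrC subrK.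
move=> j _.
rewrite mulrC; congr (_ * _).
congr qfun; have := ltn_ord j; rewrite /n; lia.
Qed.

Lemma cofactorK (D : {poly C}) (a : C) :
  D = cof D a * ('X - a%:P) ^+ (mup a D).
Proof.
have [->|nz] := eqVneq D 0; first by rewrite /Defs.cofactor div0p mul0r.
by rewrite /Defs.cofactor divpK // -mup_geq.
Qed.

Lemma XsubCX_neq0 (a : C) n : ('X - a%:P) ^+ n != 0.
Proof. by rewrite expf_neq0 // polyXsubC_eq0. Qed.

Lemma cofactor_neq0 (D : {poly C}) (a : C) : D != 0 -> cof D a != 0.
Proof.
move=> nz; apply: contraNneq nz => E0.
by rewrite (cofactorK D a) E0 mul0r.
Qed.

Lemma cofactor_nroot (D : {poly C}) (a : C) : D != 0 -> ~~ root (cof D a) a.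
Proof.
move=> nz; have h : mup a D = (mup a (cof D a) + mup a D)%N.
  by rewrite {1}(cofactorK D a) mupM ?cofactor_neq0 ?XsubCX_neq0 // mup_XsubCX eqxx.
rewrite -dvdp_XsubCl XsubC_dvd ?cofactor_neq0 //; lia.
Qed.

Lemma size_cofactor (D : {poly C}) (a : C) : D != 0 ->
  size D = (size (cof D a) + mup a D)%N.
Proof.
move=> nz; rewrite {1}(cofactorK D a) size_mul ?cofactor_neq0 ?XsubCX_neq0 //.
by rewrite size_exp_XsubC addnS.
Qed.

Lemma dvd_cofactor (D : {poly C}) (a b : C) : D != 0 -> b != a ->
  ('X - b%:P) ^+ (mup b D) %| cof D a.
Proof.
move=> nz ba; have h : ('X - b%:P) ^+ (mup b D) %| D by rewrite -mup_geq.
rewrite {2}(cofactorK D a) Gauss_dvdpl in h => //.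
apply: coprimep_expl; apply: coprimep_expr; apply: coprimep_XsubC2.
by rewrite subr_eq0 eq_sym.
Qed.

Lemma taylor_D0 (D : {poly C}) (a : C) n : D != 0 -> (n < mup a D)%N -> taylor D a n = 0.
Proof. by move=> nz; apply: taylor_of_dvd; rewrite -mup_geq. Qed.

Lemma tp0 (p : {poly C}) (a : C) : (tp p a)`_0 = p.[a].
Proof. by rewrite -horner_coef0 /tp horner_comp hornerD hornerX hornerC add0r. Qed.

Lemma taylor_Dmu (D : {poly C}) (a : C) : D != 0 ->
  taylor D a (mup a D) = (cof D a).[a].
Proof.
move=> nz; rewrite taylorE {1}(cofactorK D a) tpM tpXa coefMXn ltnn subnn.
exact: tp0.
Qed.

Lemma tp_jet (h : nat -> C) (a : C) m : tp (jet h a m) a = \poly_(n < m.+1) h n.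
Proof.
rewrite /jet tp_sum poly_def; apply: eq_bigr => i _.
by rewrite /tp comp_polyZ -/(tp _ a) tpXa.
Qed.

Lemma size_jet (h : nat -> C) (a : C) m : (size (jet h a m) <= m.+1)%N.
Proof.
rewrite /jet; elim/big_ind: _ => [|p q hp hq|i _]; first by rewrite size_poly0.
  by apply: leq_trans (size_polyD _ _) _; rewrite geq_max hp hq.
apply: leq_trans (size_scale_leq _ _) _; rewrite size_exp_XsubC; exact: ltn_ord.
Qed.

Lemma W_cong (t : R) (D : {poly C}) (rs : seq C) (a : C) n :
  D != 0 -> uniq rs -> a \in rs -> (n < mup a D)%N ->
  taylor (wedderburn t D rs) a n = gexp t a n.
Proof.
move=> nz urs ars lt.
rewrite taylorE /wedderburn tp_sum coef_sum (bigD1_seq a) //=.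
rewrite big1 ?addr0; last first.
  move=> b ba; rewrite -taylorE.
  apply: (taylor_of_dvd _ _ _ _ _ lt).
  rewrite /wedderburn_term /=; apply: dvdp_mull; apply: dvd_cofactor => //.
  by rewrite eq_sym.
rewrite /wedderburn_term /= tpM tp_jet coefM.
set E := cof D a; set c := taylor E a; set S := sinv c.
have c0 : c 0%N != 0 by rewrite /c taylorE tp0; exact: (cofactor_nroot D a nz).
pose pe := \poly_(i < n.+1) gexp t a i.
pose pS := \poly_(i < n.+1) S i.
have h1 : forall j, (j <= n)%N ->
    (\poly_(k < (mup a D).-1.+1) gmul (gexp t) (fun=> S) a k)`_j = (pe * pS)`_j.
  move=> j jn; rewrite coef_poly ifT; last by lia.
  rewrite coefM /gmul; apply: eq_bigr => i _; rewrite /pe /pS !coef_poly ifT.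
    by rewrite ifT //; lia.
  by have := ltn_ord i; lia.
rewrite (eq_bigr (fun j : 'I_n.+1 => (pe * pS)`_j * (tp E a)`_(n - j))); last first.
  by move=> j _; rewrite h1 // -ltnS.
rewrite -coefM -mulrA coefM.
have h2 : forall m, (m <= n)%N -> (pS * tp E a)`_m = (1 : {poly C})`_m.
  move=> m mn; rewrite coefM coef1 -(sinvP c m c0); apply: eq_bigr => i _.
  rewrite /pS coef_poly ifT; last by have := ltn_ord i; lia.
  by [].
under eq_bigr => j _ do rewrite h2 ?leq_subr //.
by rewrite -coefM mulr1 /pe coef_poly ltnSn.
Qed.

Lemma nroot_prod (rs : seq C) (f : C -> nat) (a : C) :
  a \notin rs -> ~~ root (\prod_(b <- rs) ('X - b%:P) ^+ (f b)) a.
Proof.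
elim: rs => [|b rs IH]; first by rewrite big_nil rootE hornerC oner_eq0.
rewrite in_cons negb_or => /andP [ab nin]; rewrite big_cons rootM negb_or IH // andbT.
case: (f b) => [|k]; first by rewrite expr0 rootE hornerC oner_eq0.
by rewrite root_exp_XsubC.
Qed.

Lemma prod_dvd (rs : seq C) (f : C -> nat) (P : {poly C}) : uniq rs ->
  (forall a, a \in rs -> ('X - a%:P) ^+ (f a) %| P) ->
  \prod_(b <- rs) ('X - b%:P) ^+ (f b) %| P.
Proof.
elim: rs => [|a rs IH] /= urs H; first by rewrite big_nil dvd1p.
move/andP: urs => [nin urs]; rewrite big_cons Gauss_dvdp.
  rewrite H ?mem_head //= IH // => b bin; apply: H; by rewrite in_cons bin orbT.
apply: coprimep_expl; rewrite coprimep_sym coprimep_XsubC; exact: nroot_prod.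
Qed.

Lemma D_dvd (D : {poly C}) (rs : seq C) (P : {poly C}) : D != 0 -> uniq rs ->
  (forall a, root D a <-> a \in rs) ->
  (forall a, a \in rs -> ('X - a%:P) ^+ (mup a D) %| P) -> D %| P.
Proof.
move=> nz urs hroot H.
set Q := \prod_(b <- rs) ('X - b%:P) ^+ (mup b D).
have QP : Q %| P by apply: prod_dvd.
have QD : Q %| D by apply: prod_dvd => // a _; rewrite -mup_geq.
set S := D %/ Q; have DS : D = S * Q by rewrite divpK.
have nS : forall b, ~~ root S b.
  move=> b; apply/negP => rb.
  have bin : b \in rs by apply/hroot; rewrite DS rootM rb.
  have : ('X - b%:P) ^+ (mup b D).+1 %| D.
    rewrite {2}DS exprS; apply: dvdp_mul; first by rewrite dvdp_XsubCl.
    rewrite /Q (bigD1_seq b) //=; exact: dvdp_mulIl.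
  by rewrite -mup_geq // ltnn.
have : size S == 1.
  by apply: contraT => /closed_rootP [x rx]; have := nS x; rewrite rx.
case/size_poly1P => k k0 Sk.
by rewrite DS Sk mul_polyC dvdpZl.
Qed.

Lemma size_W (t : R) (D : {poly C}) (rs : seq C) : D != 0 ->
  (forall a, a \in rs -> root D a) -> (size (wedderburn t D rs) < size D)%N.
Proof.
move=> nz H; rewrite /wedderburn big_seq; elim/big_ind: _ => [|p q hp hq|b bin].
- by rewrite size_poly0 size_poly_gt0.
- by apply: leq_ltn_trans (size_polyD _ _) _; rewrite gtn_max hp hq.
rewrite /wedderburn_term /=; apply: leq_ltn_trans (size_polyMleq _ _) _.
have mu0 : (0 < mup b D)%N by rewrite -XsubC_dvd // dvdp_XsubCl; apply: H.
have := size_jet (gmul (gexp t) (fun=> sinv (taylor (cof D b) b)) b) b (mup b D).-1.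
rewrite (size_cofactor D b nz).
move=> hx; rewrite prednK // in hx; rewrite [X in (X.-1 < _)%N]addnC.
apply: (@leq_ltn_trans (size (cof D b) + mup b D).-1).
  have hp : forall x y, (x <= y)%N -> (x.-1 <= y.-1)%N by move=> x y; lia.
  by apply: hp; rewrite leq_add2l.
by rewrite ltn_predL addn_gt0 mu0 orbT.
Qed.
End W.

Theorem mainTheorem5 (R : realType) (t : R) (D : {poly R[i]}) (rs : seq R[i]) :
  (1 < size D)%N ->
  uniq rs ->
  (forall a : R[i], root D a <-> a \in rs) ->
  forall Rem : {poly R[i]},
    ((size Rem < size D)%N /\
     exists q : gpoly R,
       gexp t = gadd (gmul (gpoly_of_poly D) q) (gpoly_of_poly Rem))
    <-> Rem = wedderburn t D rs.
Proof.
move=> sD urs hroot Rem.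
have nz : D != 0 by rewrite -size_poly_gt0; lia.
split.
  case=> sR [q Hq]; apply/eqP; rewrite -subr_eq0; apply/eqP.
  set P := Rem - wedderburn t D rs.
  have PD : D %| P.
    apply: (D_dvd _ _ _ _ nz urs hroot) => a ain; apply: dvd_of_taylor => n lt.
    rewrite taylorE tpB coefB -!taylorE W_cong //.
    have := congr1 (fun f => f a n) Hq; rewrite /gadd /gmul /gpoly_of_poly /=.
    rewrite big1 ?add0r => [<-|i _]; first by rewrite subrr.
    by rewrite taylor_D0 ?mul0r //; have := ltn_ord i; lia.
  apply: contraTeq PD => Pn0; rewrite gtNdvdp //.
  apply: leq_ltn_trans (size_polyD _ _) _; rewrite size_polyN gtn_max sR.
  by apply: size_W => // a /hroot.
move=> ->; split.
  by apply: size_W => // a /hroot.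
set W := wedderburn t D rs.
exists (fun a => @qfun R (taylor D a) (fun n => gexp t a n - taylor W a n) (mup a D)).
apply: functional_extensionality => a; apply: functional_extensionality => n.
rewrite /gadd /gmul /gpoly_of_poly /= qfunP ?subrK //.
- by move=> i lt; rewrite taylor_D0.
- by rewrite taylor_Dmu //; apply: cofactor_nroot.
move=> i lt; case ain: (a \in rs).
  by rewrite /W W_cong // subrr.
have : ~~ root D a by apply/negP => /hroot; rewrite ain.
by move/mupNroot => h; rewrite h in lt.
Qed.
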